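(* Let $(\mathrm{FE}_{n,M,Q})_{n,M,Q\in\mathbb Z}\subseteq\mathbb N_0$ satisfy for all $n,M,Q\in\mathbb N$ that $\mathrm{FE}_{0,M,Q}=0$ and $$\mathrm{FE}_{n,M,Q}\le M^n+\sum_{l=0}^{n-1}\Big[QM^{n-l}\big(1+\mathrm{FE}_{l,M,Q}+\mathbb 1_{\mathbb N}(l)+\mathbb 1_{\mathbb N}(l)\,\mathrm{FE}_{l-1,M,Q}\big)\Big].$$ Then for all $N\in\mathbb N$, $\mathrm{FE}_{N,N,N}\le 8N^{2N}$.
   Context: $\mathbb 1_{\mathbb N}(l)$ equals $1$ if $l\in\mathbb N=\{1,2,\dots\}$ and $0$ otherwise. *)

(* Defs.v *)
From mathcomp Require Import all_boot all_order all_algebra.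
Set Implicit Arguments. Unset Strict Implicit. Unset Printing Implicit Defensive.
Import Order.TTheory GRing.Theory Num.Theory.

Definition indN (l : int) : nat := nat_of_bool (0 < l)%R.

(* Main.v *)
Require Import Defs.
From mathcomp Require Import all_boot all_order all_algebra.
From mathcomp Require Import zify.
Import Order.TTheory GRing.Theory Num.Theory.

Lemma geomG (N k n : nat) :
  ((\sum_(l < n) N ^ (n - l) * (N + k) ^ l) * k + N ^ n.+1 = N * (N + k) ^ n)%N.
Proof.
elim: n => [|n IH]; first by rewrite big_ord0 mul0n add0n expn1 expn0 muln1.
rewrite big_ord_recr /= subSnn expn1.
rewrite (eq_bigr (fun l : 'I_n => N * (N ^ (n - l) * (N + k) ^ l))); last first.
  by move=> i _; rewrite /= subSn ?expnS ?mulnA // ltnW.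
rewrite -big_distrr /= mulnDl -mulnA addnAC (expnS N n.+1) -mulnDr IH.
rewrite [(N + k)^n.+1]expnS; lia.
Qed.

Lemma indN0 : indN 0 = 0%N. Proof. by []. Qed.
Lemma indNS k : indN k.+1 = 1%N. Proof. by []. Qed.
Lemma predZ k : (Posz k.+1 - 1)%R = Posz k.
Proof. by rewrite -addn1 PoszD addrK. Qed.

Lemma bern m h : (h <= m.+1)%N -> (m.+1 ^ h * (m.+1 - h) <= m.+1 * m ^ h)%N.
Proof.
elim: h => [|h IH] Hh; first by rewrite !expn0 muln1 mul1n subn0.
have := IH (ltnW Hh) => {IH} IH.
rewrite !expnS.
have : (m.+1 ^ h * (m.+1 - h) * m <= m.+1 * m ^ h * m)%N by rewrite leq_mul2r IH orbT.
set A := (m.+1 ^ h)%N. set B := (m ^ h)%N. move: Hh => Hh.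
nia.
Qed.

Lemma exp8 N : (1 < N)%N -> (N ^ N <= 8 * (N.-1) ^ N)%N.
Proof.
move=> N1.
have Hd : N = (N./2 + N./2 + odd N)%N.
  by rewrite addnn -[LHS](odd_double_half N) addnC.
have Hh : (N./2 <= N)%N by rewrite -divn2 leq_div.
have B : (N ^ N./2 * (N - N./2) <= N * (N.-1) ^ N./2)%N.
  by case: N N1 Hh {Hd} => [//|n] _ Hh; apply: bern.
have H2 : (N <= 2 * (N - N./2))%N by move: Hd; lia.
have K : (N ^ N./2 <= 2 * (N.-1) ^ N./2)%N.
  rewrite -(@leq_pmul2l N) ?(ltnW N1) //.
  apply: (leq_trans _ (leq_trans (leq_mul (leqnn 2) B) _)).
  - have := leq_mul (leqnn (N ^ N./2)) H2.
    by move=> H; rewrite mulnC (leq_trans H) // mulnCA.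
  - by rewrite mulnCA.
have R : (N ^ odd N <= 2 * (N.-1) ^ odd N)%N.
  by case: (odd N); rewrite /= ?expn1 ?expn0 //=; lia.
rewrite {2 4}Hd !expnD.
have := leq_mul (leq_mul K K) R.
move=> H; apply: (leq_trans H). rewrite -!mulnA. rewrite !mulnA. lia.
Qed.

Lemma final N : (0 < N)%N -> ((N * N + N + 1) ^ N <= 8 * N ^ (2 * N))%N.
Proof.
move=> N0; case: (ltnP 1 N) => N1; last by have -> : N = 1%N by lia.
have E := @exp8 N N1.
have P : ((N * N + N + 1) ^ N * N.-1 ^ N <= N ^ N * N ^ (2 * N))%N.
  rewrite -expnD (_ : (N + 2 * N = 3 * N)%N); last by lia.
  rewrite -expnMn mulnC expnM leq_exp2r //.
  case: N N1 {E} N0 => [//|n] _ _ /=. nia.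
rewrite -(@leq_pmul2l (N ^ N)) ?expn_gt0 ?N0 //.
apply: (leq_trans (leq_mul E (leqnn _))).
move: P; move: ((N * N + N + 1) ^ N)%N (N.-1 ^ N)%N (N ^ N)%N (N ^ (2 * N))%N.
move=> a b c d P. nia.
Qed.

Lemma fin (N D y A S P G Y: nat) : D = N*N -> y = N + (D+1) -> (0<N) ->
 A <= P + S -> y * S <= N*(y+1)*G -> G*(D+1) + N*P = N*Y -> y*P <= N*Y -> (D+1)*y <= Y ->
 A.+1 <= Y.
Proof.
move=> hD hy N0 h1 h2 h3 h4 h5.
have p1 : (D+1)*(y*A) <= (D+1)*(y*P) + (D+1)*(y*S).
  by rewrite -mulnDr leq_mul2l -mulnDr leq_mul2l h1 !orbT.
have p2 : (D+1)*(y*S) <= (D+1)*(N*(y+1)*G) by rewrite leq_mul2l h2 orbT.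
have e : N*(y+1)*(G*(D+1)) + N*(y+1)*(N*P) = N*(y+1)*(N*Y) by rewrite -mulnDr h3.
rewrite ltnNge; apply/negP => HYA.
have p3 := leq_mul (leqnn ((D+1)*y)) HYA.
clear h1 h2 h3 HYA. subst y D. lia.
Qed.
Import Order.TTheory GRing.Theory Num.Theory.

Theorem lemma3p16 (FE : int -> int -> int -> nat)
  (H0 : forall M Q : nat, (0 < M)%N -> (0 < Q)%N -> FE 0%R M Q = 0%N)
  (Hrec : forall n M Q : nat, (0 < n)%N -> (0 < M)%N -> (0 < Q)%N ->
     (FE n M Q <= M ^ n + \sum_(l < n)
        Q * M ^ (n - l) * (1 + FE l M Q + indN l + indN l * FE (l%:Z - 1)%R M Q))%N) :
  forall N : nat, (0 < N)%N -> (FE N N N <= 8 * N ^ (2 * N))%N.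
Proof.
move=> N N0.
pose D := (N * N)%N. pose y := (N + (D + 1))%N.
have F0 : FE (Posz 0) N N = 0%N by exact: H0.
have key : forall n : nat, ((FE n N N).+1 <= y ^ n)%N.
  elim/ltn_ind => n IH.
  case: n IH => [|[|n]] IH.
  - by rewrite F0.
  - have := Hrec 1%N N N isT N0 N0.
    rewrite big_ord1 /= F0 indN0 /y /D subn0 !expn1 mul0n !addn0 muln1. lia.
  - set n' := n.+2.
    have Hr := Hrec n' N N isT N0 N0.
    pose G := (\sum_(l < n') N ^ (n' - l) * (N + (D + 1)) ^ l)%N.
    have Hs : (y * (\sum_(l < n') N * N ^ (n' - l) * (1 + FE l N N + indN l
                  + indN l * FE (l%:Z - 1)%R N N)) <= N * (y + 1) * G)%N.
      rewrite /G !big_distrr /=; apply: leq_sum => -[[|k] Hk] _ /=.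
      - rewrite F0 indN0 subn0 /=. 
        move: (N ^ n')%N => X. rewrite /y. nia.
      - rewrite indNS predZ mul1n.
        have I1 := IH k.+1 Hk. have I2 := IH k (ltnW Hk).
        rewrite -/y expnS in I1 *.
        move: (N ^ (n' - k.+1))%N I1 I2 => X I1 I2.
        move: (y ^ k)%N (FE k.+1 N N) (FE k N N) I1 I2 => Z a b I1 I2.
        have : (y * (1 + a + 1 + b) <= (y + 1) * (y * Z))%N by nia.
        move=> h; apply: (@leq_trans ((N * X) * ((y + 1) * (y * Z)))).
          by rewrite mulnCA leq_mul2l h orbT.
        lia.
    have Hg := geomG N (D + 1) n'.
    rewrite expnS -/y -/G in Hg.
    have H5 : (y * N ^ n' <= N * y ^ n')%N.
      have L : (N ^ n.+1 <= y ^ n.+1)%N by rewrite leq_exp2r // /y; lia.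
      rewrite /n' !(expnS _ n.+1).
      by rewrite mulnCA leq_mul2l leq_mul2l L !orbT.
    have H4 : ((D + 1) * y <= y ^ n')%N.
      have L : (1 <= y ^ n)%N by rewrite expn_gt0 /y; lia.
      have L2 : (D + 1 <= y)%N by rewrite /y; lia.
      rewrite /n' !expnS.
      move: (y ^ n)%N L => q L. nia.
    exact: (@fin N D y _ _ _ G _ (erefl _) (erefl _) N0 Hr Hs Hg H5 H4).
have := key N.
rewrite /y /D (_ : (N + (N * N + 1) = N * N + N + 1)%N); last by lia.
have := @final N N0.
move: ((N * N + N + 1) ^ N)%N (N ^ (2 * N))%N => a b. lia.
Qed.
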